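(* Let $n\in\mathbb{N}$, $K>0$, $\Gamma\ge0$, and let $f:[-K,K]^n\to\mathbb{R}$ be $\Gamma$-Lipschitz with respect to $\|\cdot\|_\infty$. Then for every $\epsilon>0$ there exists a discrete-time LIF-SNN $\Phi$ with direct encoding, membrane potential output, $T=1$, $L=2$ and hidden-layer widths $n_1=\big(\max\{\lceil\frac{2K}{\epsilon}\Gamma\rceil,1\}+1\big)n$, $n_2=\max\{\lceil\frac{2K\Gamma}{\epsilon}\rceil^n,1\}$, such that $\sup_{x\in[-K,K]^n}|R(\Phi)(x)-f(x)|\le\epsilon$.
   Context: A function $f$ is $\Gamma$-Lipschitz w.r.t. $\|\cdot\|_\infty$ if $|f(x)-f(y)|\le\Gamma\max_i|x_i-y_i|$ for all $x,y$. A discrete-time LIF-SNN with parameters $W^\ell\in\mathbb{R}^{n_\ell\times n_{\ell-1}}$, $b^\ell\in\mathbb{R}^{n_\ell}$, $u^\ell(0)\in\mathbb{R}^{n_\ell}$, $\beta^\ell\in[0,1]$, $\vartheta^\ell>0$ ($n_0=n$) and direct encoding ($s^0(t)=x$ for all $t\in[T]$) computes $s^\ell(t)=H(\beta^\ell u^\ell(t-1)+W^\ell s^{\ell-1}(t)+b^\ell-\vartheta^\ell\mathbf{1})$, $u^\ell(t)=\beta^\ell u^\ell(t-1)+W^\ell s^{\ell-1}(t)+b^\ell-\vartheta^\ell s^\ell(t)$, $\ell\in[L]$, $t\in[T]$, with $H$ the entrywise Heaviside function ($H(z)=1$ iff $z\ge0$); with membrane potential output its realization is $R(\Phi)(x)=\sum_{t=1}^Ta_t(Vs^L(t)+c)$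 for $a\in\mathbb{R}^T$, $V\in\mathbb{R}^{1\times n_L}$, $c\in\mathbb{R}$. *)

(* Defs.v *)
From mathcomp Require Import all_boot all_order all_algebra.
From mathcomp Require Import reals.
Set Implicit Arguments. Unset Strict Implicit. Unset Printing Implicit Defensive.
Import Order.TTheory GRing.Theory Num.Theory.
Local Open Scope ring_scope.

Section LIFSNN.
Variables (R : realType) (n : nat) (ws : nat -> nat).

Definition dim (l : nat) : nat := if l is l'.+1 then ws l' else n.

(* A discrete-time LIF-SNN with L layers. Layers are 0-indexed here:
   index l corresponds to layer l+1 of the paper (W^{l+1}, b^{l+1}, ...). *)
Record lif_snn (L : nat) := LIFSNN {
  W     : forall l : nat, 'M[R]_(dim l.+1, dim l);
  bias  : forall l : nat, 'cV[R]_(dim l.+1);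
  u0    : forall l : nat, 'cV[R]_(dim l.+1);
  beta  : nat -> R;
  theta : nat -> R;
  a_out : nat -> R;           (* a_t, t = 1..T *)
  V_out : 'rV[R]_(dim L);
  c_out : R }.

Definition lif_valid L (N : lif_snn L) : Prop :=
  forall l, (l < L)%N -> 0 <= beta N l <= 1 /\ 0 < theta N l.

Definition heav m (v : 'cV[R]_m) : 'cV[R]_m :=
  map_mx (fun z : R => if 0 <= z then 1 else 0) v.

Section Dyn.
Variables (L : nat) (N : lif_snn L).

Definition preact (uprev : forall l, 'cV[R]_(dim l.+1)) l (s : 'cV[R]_(dim l))
  : 'cV[R]_(dim l.+1) :=
  beta N l *: uprev l + W N l *m s + bias N l.

Fixpoint spk (uprev : forall l, 'cV[R]_(dim l.+1)) (x : 'cV[R]_n) (l : nat)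
  : 'cV[R]_(dim l) :=
  match l return 'cV[R]_(dim l) with
  | 0 => x
  | l'.+1 => heav (preact uprev (spk uprev x l') - theta N l' *: const_mx 1)
  end.

Definition newpot (uprev : forall l, 'cV[R]_(dim l.+1)) (x : 'cV[R]_n) l
  : 'cV[R]_(dim l.+1) :=
  preact uprev (spk uprev x l) - theta N l *: spk uprev x l.+1.

Fixpoint pot (x : 'cV[R]_n) (t : nat) : forall l, 'cV[R]_(dim l.+1) :=
  match t with
  | 0 => u0 N
  | t'.+1 => newpot (pot x t') x
  end.

(* s^l(t), t >= 1 *)
Definition spikes (x : 'cV[R]_n) (t l : nat) : 'cV[R]_(dim l) :=
  spk (pot x t.-1) x l.

Definition realize (T : nat) (x : 'cV[R]_n) : R :=
  \sum_(1 <= t < T.+1) a_out N t * ((V_out N *m spikes x t L) 0 0 + c_out N).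
End Dyn.
End LIFSNN.

Definition linf_norm (R : realType) (n : nat) (v : 'cV[R]_n) : R :=
  \big[Num.max/0]_(i < n) `|v i 0|.

Definition in_box (R : realType) (n : nat) (K : R) (x : 'cV[R]_n) : Prop :=
  forall i : 'I_n, - K <= x i 0 <= K.

(* Main.v *)
Require Import Defs.
From mathcomp Require Import all_boot all_order all_algebra.
From mathcomp Require Import reals.
From mathcomp Require Import ring lra.
Set Implicit Arguments. Unset Strict Implicit. Unset Printing Implicit Defensive.
Import Order.TTheory GRing.Theory Num.Theory.
Local Open Scope ring_scope.
Section Net.
Variables (R : realType) (n n1 n2 : nat).
Local Notation ws := (fun l => nth 0%N [:: n1; n2] l).
Variables (W0 : 'M[R]_(n1, n)) (W1 : 'M[R]_(n2, n1)) (b0 : 'cV[R]_n1) (b1 : 'cV[R]_n2)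
  (V : 'rV[R]_n2) (c : R).

Definition mkW (l : nat) : 'M[R]_(Defs.dim n ws l.+1, Defs.dim n ws l) :=
  match l as l0 return 'M[R]_(Defs.dim n ws l0.+1, Defs.dim n ws l0) with
  | 0 => W0 | 1 => W1 | _.+2 => 0 end.
Definition mkb (l : nat) : 'cV[R]_(Defs.dim n ws l.+1) :=
  match l as l0 return 'cV[R]_(Defs.dim n ws l0.+1) with
  | 0 => b0 | 1 => b1 | _.+2 => 0 end.

Definition mknet : lif_snn R n ws 2 :=
  @LIFSNN R n ws 2 mkW mkb (fun l => 0) (fun _ => 0) (fun _ => 1) (fun _ => 1) V c.

Lemma mknet_valid : lif_valid mknet.
Proof. by move=> l _; rewrite /= lexx ler01 ltr01. Qed.

Lemma mknet_real x : realize mknet 1 x =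
  (V *m heav (W1 *m heav (W0 *m x + b0 - const_mx 1) + b1 - const_mx 1)) 0 0 + c.
Proof.
rewrite /realize big_nat1 mul1r /spikes /=.
rewrite /preact /= !scale0r !add0r !scale1r.
done.
Qed.
End Net.
Section Grid.
Variables (R : realType) (n m : nat) (K : R).
Hypothesis Kpos : 0 < K.
Hypothesis mpos : (0 < m)%N.

Definition hh : R := 2 * K / m%:R.
Definition tg (k : nat) : R := - K + k%:R * hh.
Definition tt (j : 'I_m.+1) : R := if (j < m)%N then tg j else K + 1.

Local Notation Pty := ('I_m.+1 * 'I_n)%type.
Local Notation Cty := {ffun 'I_n -> 'I_m}.
Lemma HP : (m.+1 * n)%N = #|{: Pty}|.
Proof. by rewrite card_prod !card_ord. Qed.
Lemma HC : (m ^ n)%N = #|{: Cty}|.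
Proof. by rewrite card_ffun !card_ord. Qed.
Definition eP (r : 'I_(m.+1 * n)) : Pty := enum_val (cast_ord HP r).
Definition hP (p : Pty) : 'I_(m.+1 * n) := cast_ord (esym HP) (enum_rank p).
Definition eC (r : 'I_(m ^ n)) : Cty := enum_val (cast_ord HC r).
Definition hC (p : Cty) : 'I_(m ^ n) := cast_ord (esym HC) (enum_rank p).
Lemma ePK : cancel hP eP.
Proof. by move=> p; rewrite /eP /hP cast_ordKV enum_rankK. Qed.
Lemma hPK : cancel eP hP.
Proof. by move=> p; rewrite /eP /hP enum_valK cast_ordK. Qed.
Lemma eCK : cancel hC eC.
Proof. by move=> p; rewrite /eC /hC cast_ordKV enum_rankK. Qed.
Lemma hCK : cancel eC hC.
Proof. by move=> p; rewrite /eC /hC enum_valK cast_ordK. Qed.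

Definition W0 : 'M[R]_(m.+1 * n, n) := \matrix_(r, c) ((c == (eP r).2)%:R).
Definition b0 : 'cV[R]_(m.+1 * n) := \col_r (1 - tt (eP r).1).
Definition wl (k : 'I_m) : 'I_m.+1 := widen_ord (leqnSn m) k.
Definition ll (k : 'I_m) : 'I_m.+1 := lift ord0 k.
Definition W1 : 'M[R]_(m ^ n, m.+1 * n) :=
  \matrix_(q, r) (((eP r).1 == wl (eC q (eP r).2))%:R - ((eP r).1 == ll (eC q (eP r).2))%:R).
Definition b1 : 'cV[R]_(m ^ n) := \col_q (1 - n%:R).
Definition corner (c : Cty) : 'cV[R]_n := \col_i tg (c i).

Definition ind (b : bool) : R := if b then 1 else 0.
Definition Sx (x : 'cV[R]_n) (p : Pty) : R := ind (0 <= x p.2 0 - tt p.1).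

Lemma layer1 x : heav (W0 *m x + b0 - const_mx 1) = \col_r Sx x (eP r).
Proof.
apply/matrixP => r k; rewrite !mxE (bigD1 (eP r).2) //= mxE eqxx mul1r.
rewrite big1 ?addr0; last by move=> i /negbTE ne; rewrite mxE ne mul0r.
rewrite ord1 /Sx /ind; congr (if 0 <= _ then _ else _); ring.
Qed.

Lemma sum_ind (T : finType) (a : T) (F : T -> R) :
  \sum_j (j == a)%:R * F j = F a.
Proof.
rewrite (bigD1 a) //= eqxx mul1r big1 ?addr0 // => j /negbTE->; by rewrite mul0r.
Qed.

Lemma layer2sum x q : (W1 *m \col_r Sx x (eP r)) q 0 =
  \sum_i (Sx x (wl (eC q i), i) - Sx x (ll (eC q i), i)).
Proof.
rewrite mxE; under eq_bigr do rewrite !mxE.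
rewrite (reindex hP) /=; last by exists eP => p _; [apply: ePK | apply: hPK].
under eq_bigr do rewrite ePK.
rewrite (eq_bigr (fun p => (fun j i => ((j == wl (eC q i))%:R - (j == ll (eC q i))%:R) * Sx x (j, i)) p.1 p.2)); last by case.
rewrite -(pair_big xpredT xpredT (fun j i => ((j == wl (eC q i))%:R - (j == ll (eC q i))%:R) * Sx x (j, i))) /= exchange_big /=; apply: eq_bigr => i _.
under eq_bigr do rewrite mulrBl.
by rewrite sumrB !sum_ind.
Qed.

Definition s2 x q : R := ind (0 <= \sum_i (Sx x (wl (eC q i), i) - Sx x (ll (eC q i), i)) - n%:R).

Lemma netout x (V : 'rV[R]_(m ^ n)) :
  realize (mknet W0 W1 b0 b1 V 0) 1 x = \sum_q V 0 q * s2 x q.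
Proof.
rewrite mknet_real layer1 addr0 mxE; apply: eq_bigr => q _; rewrite !mxE.
have L2 := layer2sum x q; rewrite mxE in L2; have E : forall a b : R, a + (1 - b) - 1 = a - b by move=> a b; ring.
by rewrite L2 /s2 /ind E.
Qed.


Lemma mR0 : (m%:R : R) != 0.
Proof. by rewrite pnatr_eq0 -lt0n. Qed.
Lemma hh_gt0 : 0 < hh.
Proof. by rewrite /hh divr_gt0 ?ltr0n // mulr_gt0. Qed.
Lemma tgS k : tg k.+1 = tg k + hh.
Proof. by rewrite /tg -addn1 natrD mulrDl mul1r addrA. Qed.
Lemma tg_mono i j : (i <= j)%N -> tg i <= tg j.
Proof.
by move=> ij; rewrite /tg lerD2l ler_wpM2r ?ler_nat // ltW // hh_gt0.
Qed.
Lemma tgm : tg m = K.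
Proof.
rewrite /tg /hh mulrCA divff ?mR0 // mulr1; ring.
Qed.
Lemma tg0 : tg 0 = - K.
Proof. by rewrite /tg mul0r addr0. Qed.

Lemma cell_ex (x : 'cV[R]_n) (i : 'I_n) : in_box K x -> exists k : 'I_m,
  tg k <= x i 0 /\ ((k.+1 < m)%N -> x i 0 < tg k.+1).
Proof.
move=> /(_ i) /andP[xl xu].
pose P j := (j < m)%N && (tg j <= x i 0).
have exP : exists j, P j by exists 0%N; rewrite /P mpos tg0.
have ubP : forall j, P j -> (j <= m)%N by move=> j /andP[/ltnW].
case: (ex_maxnP exP ubP) => k /andP[km tk] maxk.
exists (Ordinal km); split => //= k1m.
rewrite ltNge; apply/negP => tk1.
by have := maxk k.+1; rewrite /P k1m tk1 ltnn => /(_ isT).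
Qed.

Lemma cell_x (x : 'cV[R]_n) : in_box K x -> exists cx : Cty, forall i,
  tg (cx i) <= x i 0 /\ (((cx i).+1 < m)%N -> x i 0 < tg (cx i).+1).
Proof.
move=> bx; have [u Hu] := fin_all_exists (fun i => cell_ex i bx).
by exists [ffun i => u i] => i; rewrite ffunE.
Qed.

Lemma Swl (x : 'cV[R]_n) (i : 'I_n) (k : 'I_m) : Sx x (wl k, i) = ind (tg k <= x i 0).
Proof. by rewrite /Sx /tt /= ltn_ord subr_ge0. Qed.
Lemma Sll (x : 'cV[R]_n) (i : 'I_n) (k : 'I_m) : in_box K x ->
  Sx x (ll k, i) = if (k.+1 < m)%N then ind (tg k.+1 <= x i 0) else 0.
Proof.
move=> /(_ i) /andP[_ xu]; rewrite /Sx /tt /= /bump leq0n add1n.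
case: ifP => _; first by rewrite subr_ge0.
rewrite /ind subr_ge0 ifF //; apply/negbTE; rewrite -ltNge.
by apply: (le_lt_trans xu); rewrite ltrDl ltr01.
Qed.

Definition term (x : 'cV[R]_n) (c : Cty) (i : 'I_n) := Sx x (wl (c i), i) - Sx x (ll (c i), i).

Lemma ind_ge0 b : 0 <= ind b.
Proof. by rewrite /ind; case: b; rewrite ?ler01. Qed.
Lemma ind_le1 b : ind b <= 1.
Proof. by rewrite /ind; case: b; rewrite ?ler01. Qed.

Lemma term_le1 x c i : term x c i <= 1.
Proof. by rewrite /term /Sx -[1](subr0 1) lerB ?ind_le1 ?ind_ge0. Qed.

Section Cell.
Variables (x : 'cV[R]_n) (cx : Cty).
Hypothesis bx : in_box K x.
Hypothesis Hcx : forall i,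
  tg (cx i) <= x i 0 /\ (((cx i).+1 < m)%N -> x i 0 < tg (cx i).+1).

Lemma term_cx i : term x cx i = 1.
Proof.
have [h1 h2] := Hcx i.
rewrite /term Swl Sll //; case: ifP => [/h2 lt|_].
  by rewrite /ind h1 ifF ?subr0 //; apply/negbTE; rewrite -ltNge.
by rewrite /ind h1 subr0.
Qed.

Lemma term_ne (c : Cty) (i : 'I_n) : c i != cx i -> term x c i <= 0.
Proof.
have [h1 h2] := Hcx i.
rewrite neq_ltn => /orP[lt|lt].
  have k1m : ((c i).+1 < m)%N by exact: (leq_ltn_trans lt (ltn_ord _)).
  have t1 : tg (c i).+1 <= x i 0.
    have t2 : tg (c i).+1 <= tg (cx i) by apply: tg_mono.
    exact: le_trans t2 h1.
  by rewrite /term Sll // k1m t1 subr_le0; exact: ind_le1.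
have k1m : ((cx i).+1 < m)%N by exact: (leq_ltn_trans lt (ltn_ord _)).
have nx : ~~ (tg (c i) <= x i 0).
  rewrite -ltNge; apply: (lt_le_trans (h2 k1m)); exact: tg_mono.
by rewrite /term Swl (negbTE nx) sub0r oppr_le0; exact: ind_ge0.
Qed.

Lemma s2_cx : s2 x (hC cx) = 1.
Proof.
rewrite /s2 eCK; under eq_bigr do rewrite -/(term x cx _) term_cx.
by rewrite sumr_const card_ord subrr /ind lexx.
Qed.

Lemma s2_ne q : q != hC cx -> s2 x q = 0.
Proof.
move=> qne; have cne : eC q != cx.
  by apply: contra qne => /eqP <-; rewrite hCK.
have [i0 ne] : exists i0, eC q i0 != cx i0.
  case: (pickP (fun i => eC q i != cx i)) => [i0 ne|H]; first by exists i0.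
  by case/negP: cne; apply/eqP/ffunP => i; move: (H i) => /negbFE/eqP.
rewrite /s2; under eq_bigr do rewrite -/(term x (eC q) _).
rewrite /ind ifF //; apply/negbTE; rewrite -ltNge subr_lt0.
rewrite (bigD1 i0) //=.
have -> : (n%:R : R) = 1 + \sum_(i < n | i != i0) 1.
  have S1 : \sum_(i < n) (1 : R) = n%:R by rewrite sumr_const card_ord.
  by rewrite (bigD1 i0) //= in S1; rewrite -S1.
apply: ltr_leD; first by apply: (le_lt_trans (term_ne ne)); exact: ltr01.
by apply: ler_sum => i _; exact: term_le1.
Qed.
End Cell.


Lemma corner_box (c : Cty) : in_box K (corner c).
Proof.
move=> i; rewrite mxE; apply/andP; split; first by rewrite -tg0 tg_mono.
by rewrite -[X in _ <= X]tgm tg_mono // ltnW.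
Qed.

Lemma cell_dist (x : 'cV[R]_n) (cx : Cty) : in_box K x ->
  (forall i, tg (cx i) <= x i 0 /\ (((cx i).+1 < m)%N -> x i 0 < tg (cx i).+1)) ->
  linf_norm (corner cx - x) <= hh.
Proof.
move=> bx Hcx; rewrite /linf_norm.
apply: (big_ind (fun y => y <= hh)); first exact: ltW hh_gt0.
  by move=> a b ha hb; rewrite ge_max ha hb.
move=> i _; rewrite !mxE; have [h1 h2] := Hcx i.
rewrite ler_norml; apply/andP; split; last first.
  by apply: le_trans (ltW hh_gt0); rewrite subr_le0.
suff : x i 0 <= tg (cx i).+1 by rewrite tgS => ?; lra.
case: (ltnP (cx i).+1 m) => [/h2/ltW //|ge].
have -> : (cx i).+1 = m by apply/eqP; rewrite eqn_leq ge ltn_ord.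
by rewrite tgm; have /andP[] := bx i.
Qed.

Lemma grid_approx (Gamma eps : R) (f : 'cV[R]_n -> R) :
  0 <= Gamma -> Gamma * hh <= eps ->
  (forall x y : 'cV[R]_n, in_box K x -> in_box K y ->
     `|f x - f y| <= Gamma * linf_norm (x - y)) ->
  forall x, in_box K x ->
  `|realize (mknet W0 W1 b0 b1 (\row_q f (corner (eC q))) 0) 1 x - f x| <= eps.
Proof.
move=> G0 Gh Lip x bx; have [cx Hcx] := cell_x bx.
rewrite netout (bigD1 (hC cx)) //= (s2_cx bx Hcx) big1 ?addr0; last first.
  by move=> q qne; rewrite (s2_ne bx Hcx) // mulr0.
rewrite mxE mulr1 eCK.
apply: le_trans (Lip _ _ (corner_box cx) bx) _.
apply: le_trans Gh; rewrite ler_wpM2l //; exact: cell_dist.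
Qed.

End Grid.
Lemma final_main (R : realType) (n m : nat) (K Gamma eps : R) (f : 'cV[R]_n -> R)
  (n1 n2 : nat) : 0 < K -> (0 < m)%N -> 0 <= Gamma -> Gamma * hh m K <= eps ->
  (forall x y : 'cV[R]_n, in_box K x -> in_box K y ->
     `|f x - f y| <= Gamma * linf_norm (x - y)) ->
  n1 = (m.+1 * n)%N -> n2 = (m ^ n)%N ->
  exists N : lif_snn R n (fun l => nth 0%N [:: n1; n2] l) 2,
    lif_valid N /\
    forall x : 'cV[R]_n, in_box K x -> `|realize N 1 x - f x| <= eps.
Proof.
move=> Kp mp G0 Gh Lip -> ->.
exists (mknet (@W0 R n m) (@W1 R n m) (@b0 R n m K) (@b1 R n m) (\row_q f (@corner R n m K (eC q))) 0).
split; first exact: mknet_valid.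
exact: (grid_approx Kp mp G0 Gh Lip).
Qed.

Lemma trivial_net (R : realType) (n : nat) (K eps : R) (f : 'cV[R]_n -> R)
  (n1 n2 : nat) : 0 < K -> 0 < eps ->
  (forall x y : 'cV[R]_n, in_box K x -> in_box K y ->
     `|f x - f y| <= 0 * linf_norm (x - y)) ->
  exists N : lif_snn R n (fun l => nth 0%N [:: n1; n2] l) 2,
    lif_valid N /\
    forall x : 'cV[R]_n, in_box K x -> `|realize N 1 x - f x| <= eps.
Proof.
move=> Kp ep Lip.
exists (mknet (n:=n) 0 0 0 0 0 (f 0)); split; first exact: mknet_valid.
move=> x bx; rewrite mknet_real mul0mx mxE add0r.
have b0 : in_box K (0 : 'cV[R]_n).
  by move=> i; rewrite mxE oppr_le0 ltW // ltW.
apply: le_trans (Lip _ _ b0 bx) _; rewrite mul0r; exact: ltW.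
Qed.

Unset Implicit Arguments.

Theorem corollaryB9 (R : realType) (n : nat) (K Gamma : R) (f : 'cV[R]_n -> R) :
  0 < K -> 0 <= Gamma ->
  (forall x y : 'cV[R]_n, in_box K x -> in_box K y ->
     `|f x - f y| <= Gamma * linf_norm (x - y)) ->
  forall eps : R, 0 < eps ->
  let n1 := ((absz (Num.max (Num.ceil (2 * K / eps * Gamma)) 1)).+1 * n)%N in
  let n2 := maxn ((absz (Num.ceil (2 * K * Gamma / eps))) ^ n) 1 in
  exists N : lif_snn R n (fun l => nth 0%N [:: n1; n2] l) 2,
    lif_valid N /\
    forall x : 'cV[R]_n, in_box K x -> `|realize N 1 x - f x| <= eps.
Proof.
move=> Kp G0 Lip eps ep n1 n2.
have yE : 2 * K / eps * Gamma = 2 * K * Gamma / eps by rewrite mulrAC.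
have y0 : 0 <= 2 * K * Gamma / eps.
  apply: divr_ge0; last exact: ltW.
  by apply: mulr_ge0 => //; apply: mulr_ge0 => //; exact: ltW.
have c0 : 0 <= Num.ceil (2 * K * Gamma / eps).
  by rewrite ceil_ge0 (lt_le_trans _ y0) // ltrN10.
have [ce|cne] := eqVneq (Num.ceil (2 * K * Gamma / eps)) 0.
  have yle : 2 * K * Gamma / eps <= 0 by rewrite -ceil_le0 ce.
  have G00 : Gamma = 0.
    apply/eqP; rewrite eq_le G0 andbT.
    have : 2 * K * Gamma <= 0.
      by move: yle; rewrite ler_pdivrMr // mul0r.
    by rewrite -mulrA pmulr_rle0 // pmulr_rle0.
  rewrite G00 in Lip; exact: (@trivial_net R n K eps f n1 n2 Kp ep Lip).
set c := Num.ceil (2 * K * Gamma / eps) in c0 cne.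
set m := absz c.
have cm : c = m%:Z by rewrite /m gez0_abs.
have mp : (0 < m)%N by rewrite lt0n; apply: contra cne; rewrite cm => /eqP ->.
apply: (@final_main R n m K Gamma eps f) => //.
- rewrite /hh; have := ceil_ge (2 * K * Gamma / eps); rewrite -/c cm.
  rewrite ler_pdivrMr // => h.
  rewrite mulrA ler_pdivrMr ?ltr0n // pmulrn.
  by rewrite (mulrC Gamma) (mulrC eps) -pmulrn.
- rewrite /n1 yE -/c cm; congr (_ * _)%N; congr (_.+1).
  rewrite max_l //; by rewrite lez_nat.
- by rewrite /n2 -/c cm; apply/maxn_idPl; rewrite expn_gt0 mp.
Qed.
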